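(* Let $r$ be a positive odd integer and $x\in\mathbb{I}$. Then: (i) $y_1(x)\le\frac1r$ if and only if $d_1(x)\ge r$. (ii) If $n\ge2$ and $\epsilon_n(x)=\epsilon_{n-1}(x)$ (i.e. $s_{n-1}(x)=1$), then $y_n(x)\le\frac1r$ if and only if $d_n(x)\ge r(d_{n-1}(x)-1)$. (iii) If $n\ge2$ and $\epsilon_n(x)=-\epsilon_{n-1}(x)$ (i.e. $s_{n-1}(x)=-1$), then $y_n(x)\le\frac1r$ if and only if $d_n(x)\ge r(d_{n-1}(x)+1)$.
   Context: $\mathbb{I}=(0,1)\setminus\mathbb{Q}$. Define $T\colon[0,1)\to[0,1)$ by: for $k\in\mathbb{N}$, $Tx=\lceil 1/x\rceil x-1$ if $x\in(\frac{1}{2k},\frac{1}{2k-1})$; $Tx=1-\lfloor 1/x\rfloor x$ if $x\in(\frac{1}{2k+1},\frac{1}{2k})$; $Tx=0$ if $x\in\{0\}\cup\{1/n\colon n\ge 2\}$. For $x\in(0,1)$ define $d_1(x)=\lceil 1/x\rceil$, $s_1(x)=1$ if $x\in[\frac{1}{2k},\frac{1}{2k-1})$ for some $k$, and $d_1(x)=\lfloor 1/x\rfloor$, $s_1(x)=-1$ if $x\in[\frac{1}{2k+1},\frac{1}{2k})$ for some $k$; $d_{n+1}(x)=d_1(T^nx)$, $s_{n+1}(x)=s_1(T^nx)$, $\epsilon_1(x)=1$, $\epsilon_{n+1}(x)=\prod_{k=1}^ns_k(x)$. For $x\in\mathbb{I}$ define $y_1(x)=x$ and, for $n\ge2$, $y_n(x)=(d_{n-1}(x)-1)T^{n-1}x$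 if $\epsilon_n(x)=\epsilon_{n-1}(x)$, and $y_n(x)=(d_{n-1}(x)+1)T^{n-1}x$ if $\epsilon_n(x)=-\epsilon_{n-1}(x)$. *)

(* Defs.v *)
From Stdlib Require Import Reals Lra Lia ZArith ClassicalEpsilon.
Open Scope R_scope.

(* floor and ceiling on R, with values in Z.  Int_part x = up x - 1 = floor x. *)
Definition floorZ (x : R) : Z := Int_part x.
Definition ceilZ (x : R) : Z := (- Int_part (- x))%Z.

Definition irrational (x : R) : Prop :=
  ~ exists p q : Z, q <> 0%Z /\ x = IZR p / IZR q.
Definition in_I (x : R) : Prop := 0 < x < 1 /\ irrational x.

Definition decP (P : Prop) : bool :=
  if excluded_middle_informative P then true else false.

Definition in_odd_open (x : R) : Prop :=
  exists k : nat, (1 <= k)%nat /\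
    1 / INR (2 * k) < x < 1 / (INR (2 * k) - 1).
Definition in_even_open (x : R) : Prop :=
  exists k : nat, (1 <= k)%nat /\
    1 / INR (2 * k + 1) < x < 1 / INR (2 * k).
Definition in_odd_half (x : R) : Prop :=
  exists k : nat, (1 <= k)%nat /\
    1 / INR (2 * k) <= x < 1 / (INR (2 * k) - 1).

Definition T (x : R) : R :=
  if decP (in_odd_open x) then IZR (ceilZ (1 / x)) * x - 1
  else if decP (in_even_open x) then 1 - IZR (floorZ (1 / x)) * x
  else 0.

Definition d1 (x : R) : Z :=
  if decP (in_odd_half x) then ceilZ (1 / x) else floorZ (1 / x).
Definition s1 (x : R) : Z :=
  if decP (in_odd_half x) then 1%Z else (-1)%Z.

Definition d (n : nat) (x : R) : Z := d1 (Nat.iter (n - 1) T x).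
Definition s (n : nat) (x : R) : Z := s1 (Nat.iter (n - 1) T x).

(* epsilon_1 = 1, epsilon_{n+1} = prod_{k=1}^n s_k = epsilon_n * s_n *)
Fixpoint eps (n : nat) (x : R) : Z :=
  match n with
  | S ((S _) as m) => (eps m x * s m x)%Z
  | _ => 1%Z
  end.

Definition y (n : nat) (x : R) : R :=
  match n with
  | 0%nat | 1%nat => x
  | S m =>
      if Z.eq_dec (eps n x) (eps m x)
      then (IZR (d m x) - 1) * Nat.iter m T x
      else (IZR (d m x) + 1) * Nat.iter m T x
  end.

(* Main.v *)
Require Import Defs.
From Stdlib Require Import Reals ZArith Lra Lia ClassicalEpsilon.
Import Defs.
Open Scope R_scope.

Lemma Int_part_unique r z : IZR z <= r < IZR z + 1 -> Int_part r = z.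
Proof.
  intros [H1 H2]. unfold Int_part.
  assert (up r = (z+1)%Z). { symmetry; apply tech_up; rewrite plus_IZR; simpl; lra. }
  lia.
Qed.

Lemma lemA a x : 0 < a -> 0 < x -> (1/a <= x <-> 1/x <= a).
Proof. intros Ha Hx. unfold Rdiv; rewrite !Rmult_1_l. split; intro H.
 - rewrite <- (Rinv_inv a). apply Rinv_le_contravar; auto. apply Rinv_0_lt_compat; auto.
 - rewrite <- (Rinv_inv x). apply Rinv_le_contravar; auto. apply Rinv_0_lt_compat; auto.
Qed.
Lemma lemB a x : 0 < a -> 0 < x -> (1/a < x <-> 1/x < a).
Proof. intros Ha Hx. unfold Rdiv; rewrite !Rmult_1_l. split; intro H.
 - rewrite <- (Rinv_inv a). apply Rinv_lt_contravar; auto. apply Rmult_lt_0_compat; auto. apply Rinv_0_lt_compat; auto.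
 - rewrite <- (Rinv_inv x). apply Rinv_lt_contravar; auto. apply Rmult_lt_0_compat; auto. apply Rinv_0_lt_compat; auto.
Qed.
Lemma lemC a x : 0 < a -> 0 < x -> (x < 1/a <-> a < 1/x).
Proof. intros Ha Hx. unfold Rdiv; rewrite !Rmult_1_l. split; intro H.
 - rewrite <- (Rinv_inv a). apply Rinv_lt_contravar; auto. apply Rmult_lt_0_compat; auto. apply Rinv_0_lt_compat; auto.
 - rewrite <- (Rinv_inv x). apply Rinv_lt_contravar; auto. apply Rmult_lt_0_compat; auto. apply Rinv_0_lt_compat; auto.
Qed.
Lemma lemD a x : 0 < a -> 0 < x -> (x <= 1/a <-> a <= 1/x).
Proof. intros Ha Hx. unfold Rdiv; rewrite !Rmult_1_l. split; intro H.
 - rewrite <- (Rinv_inv a). apply Rinv_le_contravar; auto.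
 - rewrite <- (Rinv_inv x). apply Rinv_le_contravar; auto.
Qed.

Lemma classify x : in_I x -> exists m : nat, (1 <= m)%nat /\ INR m < 1/x < INR m + 1 /\
  d1 x = Z.of_nat (if Nat.even m then m else S m) /\ in_I (T x).
Proof.
  intros [[H0 H1] Hirr].
  assert (Hu1 : 1 < 1/x). { apply (lemC 1 x); lra. }
  set (u := 1/x) in *.
  assert (Hux : u * x = 1) by (unfold u; field; lra).
  destruct (base_Int_part u) as [B1 B2].
  set (z := Int_part u) in *.
  assert (Hne : IZR z <> u).
  { intro E. apply Hirr. exists 1%Z, z. split.
    - intro Z0. rewrite Z0 in E. simpl in E. lra.
    - rewrite E. unfold u. change (IZR 1) with 1. field. lra. }
  assert (Hz1 : (1 <= z)%Z). { assert (Hp : 0 < IZR z) by lra. apply lt_IZR in Hp. lia. }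
  set (m := Z.to_nat z).
  assert (Hzm : z = Z.of_nat m) by (unfold m; lia).
  assert (Hm : INR m = IZR z). { rewrite INR_IZR_INZ, <- Hzm. reflexivity. }
  assert (Hfl : floorZ u = z) by reflexivity.
  assert (Hce : ceilZ u = (z+1)%Z).
  { unfold ceilZ. rewrite (Int_part_unique (-u) (-z-1)). lia.
    rewrite minus_IZR, opp_IZR. change (IZR 1) with 1. lra. }
  assert (Hm1 : (1 <= m)%nat) by lia.
  exists m. split; [lia|]. split; [lra|].
  destruct (Nat.Even_or_Odd m) as [[k Hk]|[k Hk]].
  - replace (Nat.even m) with true by (rewrite Hk; symmetry; apply Nat.even_spec; exists k; auto).
    assert (Hk1 : (1 <= k)%nat) by lia.
    assert (HmR : INR m = 2 * INR k) by (rewrite Hk, mult_INR; simpl; lra).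
    assert (Nodd : ~ in_odd_half x).
    { intros [j [Hj [Ha Hb]]].
      assert (Hj0 : 1 <= INR j) by (apply (le_INR 1); lia).
      rewrite mult_INR in Ha, Hb. simpl INR in Ha, Hb.
      apply lemA in Ha; [| lra | lra].
      apply lemC in Hb; [| lra | lra].
      fold u in Ha, Hb.
      assert (INR k < INR j) by lra.
      assert (INR j < INR (S k)) by (rewrite S_INR; lra).
      apply INR_lt in H. apply INR_lt in H2. lia. }
    unfold d1, decP. destruct (excluded_middle_informative (in_odd_half x)) as [h|_]; [contradiction|].
    fold u. rewrite Hfl. split; [exact Hzm|].
    unfold T, decP.
    destruct (excluded_middle_informative (in_odd_open x)) as [h|_].
    { exfalso. apply Nodd. destruct h as [j [? [? ?]]]. exists j. split; auto. split; lra. }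
    destruct (excluded_middle_informative (in_even_open x)) as [_|h].
    2:{ exfalso. apply h. exists k. split; auto.
        rewrite plus_INR, mult_INR. simpl INR. split.
        - apply lemB; try lra. fold u. lra.
        - apply lemC; try lra. fold u. lra. }
    fold u. rewrite Hfl, <- Hm. split.
    + split.
      * assert (INR m * x < u * x) by (apply Rmult_lt_compat_r; lra). lra.
      * assert (0 < INR m * x) by (apply Rmult_lt_0_compat; lra). lra.
    + intros [p [q [Hq E]]]. apply Hirr. exists (q - p)%Z, (q * z)%Z. split; [lia|].
      assert (Hq' : IZR q <> 0) by (apply not_0_IZR; auto).
      assert (Hz' : IZR z <> 0) by lra.
      rewrite Hm in E.
      assert (E2 : IZR z * x = 1 - IZR p / IZR q) by lra.
      replace x with ((1 - IZR p / IZR q) / IZR z) by (rewrite <- E2; field; auto).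
      rewrite minus_IZR, mult_IZR. field. auto.
  - replace (Nat.even m) with false.
    2:{ symmetry. apply Bool.not_true_iff_false. intro He. apply Nat.even_spec in He.
        destruct He as [k' Hk']. lia. }
    assert (Hk0 := pos_INR k).
    assert (HmR : INR m = 2 * INR k + 1) by (rewrite Hk, plus_INR, mult_INR; simpl; lra).
    assert (Hodd : in_odd_half x).
    { exists (S k). split; [lia|]. rewrite mult_INR, (S_INR k). simpl INR. split.
      - apply lemA; try lra. fold u. lra.
      - apply lemC; try lra. fold u. lra. }
    unfold d1, decP. destruct (excluded_middle_informative (in_odd_half x)) as [_|h]; [|contradiction].
    fold u. rewrite Hce. split; [lia|].
    unfold T, decP.
    destruct (excluded_middle_informative (in_odd_open x)) as [_|h].
    2:{ exfalso. apply h. exists (S k). split; [lia|]. rewrite mult_INR, (S_INR k). simpl INR. split.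
      - apply lemB; try lra. fold u. lra.
      - apply lemC; try lra. fold u. lra. }
    fold u. rewrite Hce, plus_IZR, <- Hm. change (IZR 1) with 1. split.
    + split.
      * assert (u * x < (INR m + 1) * x) by (apply Rmult_lt_compat_r; lra). lra.
      * assert (INR m * x < u * x) by (apply Rmult_lt_compat_r; lra). lra.
    + intros [p [q [Hq E]]]. apply Hirr. exists (q + p)%Z, (q * (z + 1))%Z. split; [lia|].
      assert (Hq' : IZR q <> 0) by (apply not_0_IZR; auto).
      assert (Hz' : IZR z + 1 <> 0) by lra.
      rewrite Hm in E.
      assert (E2 : (IZR z + 1) * x = 1 + IZR p / IZR q) by lra.
      replace x with ((1 + IZR p / IZR q) / (IZR z + 1)) by (rewrite <- E2; field; auto).
      rewrite plus_IZR, mult_IZR, plus_IZR. change (IZR 1) with 1. field. auto.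
Qed.

Lemma core t q : in_I t -> (0 < q)%nat -> Nat.odd q = true ->
  (t <= 1 / INR q <-> (d1 t >= Z.of_nat q)%Z).
Proof.
  intros Ht Hq Hodd.
  destruct (classify t Ht) as [m [Hm1 [[Hlo Hhi] [Hd _]]]].
  destruct Ht as [[H0 H1] Hirr].
  apply Nat.odd_spec in Hodd. destruct Hodd as [j Hj].
  assert (HqR : 0 < INR q) by (apply lt_0_INR; lia).
  rewrite (lemD (INR q) t HqR H0).
  assert (Hne : INR q <> 1 / t).
  { intro E. apply Hirr. exists 1%Z, (Z.of_nat q). split; [lia|].
    rewrite <- INR_IZR_INZ, E. change (IZR 1) with 1. field. lra. }
  assert (Hiff : INR q <= 1 / t <-> (q <= m)%nat).
  { split; intro H.
    - assert (INR q < INR (S m)) by (rewrite S_INR; lra).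
      apply INR_lt in H2. lia.
    - apply le_INR in H. lra. }
  rewrite Hiff, Hd.
  destruct (Nat.Even_or_Odd m) as [[k Hk]|[k Hk]].
  - replace (Nat.even m) with true by (rewrite Hk; symmetry; apply Nat.even_spec; exists k; auto).
    lia.
  - replace (Nat.even m) with false.
    2:{ symmetry. apply Bool.not_true_iff_false. intro He. apply Nat.even_spec in He.
        destruct He as [k' Hk']. lia. }
    lia.
Qed.

Lemma iter_I x k : in_I x -> in_I (Nat.iter k T x).
Proof.
  intros H. induction k as [|k IH]; simpl; auto.
  destruct (classify _ IH) as [? [? [? [? ?]]]]; auto.
Qed.

Lemma d1_even t : in_I t -> exists k, (1 <= k)%nat /\ d1 t = Z.of_nat (2*k).
Proof.
  intros Ht. destruct (classify t Ht) as [m [Hm1 [_ [Hd _]]]].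
  rewrite Hd. destruct (Nat.Even_or_Odd m) as [[k Hk]|[k Hk]].
  - replace (Nat.even m) with true by (rewrite Hk; symmetry; apply Nat.even_spec; exists k; auto).
    exists k. split; [lia|]. f_equal; lia.
  - replace (Nat.even m) with false.
    2:{ symmetry. apply Bool.not_true_iff_false. intro He. apply Nat.even_spec in He.
        destruct He as [k' Hk']. lia. }
    exists (S k). split; [lia|]. f_equal; lia.
Qed.

Lemma s_pm n x : s n x = 1%Z \/ s n x = (-1)%Z.
Proof. unfold s, s1, decP. destruct excluded_middle_informative; auto. Qed.

Lemma eps_pm n x : eps n x = 1%Z \/ eps n x = (-1)%Z.
Proof.
  induction n as [|n IH]; simpl; auto.
  destruct n as [|n']; auto.
  destruct IH as [E|E]; rewrite E; destruct (s_pm (S n') x) as [F|F]; rewrite F; auto.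
Qed.

Lemma scale_iff c t r : (0 < r)%nat -> (0 < c)%Z ->
  (IZR c * t <= 1 / INR r <-> t <= 1 / INR (r * Z.to_nat c)).
Proof.
  intros Hr Hc.
  assert (HrR : 0 < INR r) by (apply lt_0_INR; lia).
  assert (HcR : 0 < IZR c) by (apply IZR_lt; lia).
  rewrite mult_INR, (INR_IZR_INZ (Z.to_nat c)), Z2Nat.id by lia.
  replace (1 / (INR r * IZR c)) with ((1 / INR r) / IZR c) by (field; lra).
  split; intro H.
  - apply Rmult_le_reg_l with (IZR c); auto. replace (IZR c * (1 / INR r / IZR c)) with (1 / INR r) by (field; lra). lra.
  - replace (1 / INR r) with (IZR c * (1 / INR r / IZR c)) by (field; lra).
    apply Rmult_le_compat_l; lra.
Qed.

Theorem lemma3p5 (r : nat) (x : R) :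
  (0 < r)%nat -> Nat.odd r = true -> in_I x ->
  (y 1 x <= 1 / INR r <-> (d 1 x >= Z.of_nat r)%Z) /\
  (forall n : nat, (2 <= n)%nat -> eps n x = eps (n - 1) x ->
     (y n x <= 1 / INR r <-> (d n x >= Z.of_nat r * (d (n - 1) x - 1))%Z)) /\
  (forall n : nat, (2 <= n)%nat -> eps n x = (- eps (n - 1) x)%Z ->
     (y n x <= 1 / INR r <-> (d n x >= Z.of_nat r * (d (n - 1) x + 1))%Z)).
Proof.
  intros Hr Hodd Hx. split; [|split].
  - simpl. unfold d. simpl. apply core; auto.
  - intros n Hn E. destruct n as [|[|n']]; [lia|lia|].
    replace (S (S n') - 1)%nat with (S n') in * by lia.
    unfold y. destruct (Z.eq_dec (eps (S (S n')) x) (eps (S n') x)) as [_|ne]; [|contradiction].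
    unfold d. replace (S (S n') - 1)%nat with (S n') by lia. replace (S n' - 1)%nat with n' by lia.
    simpl Nat.iter at 2.
    set (z := Nat.iter n' T x).
    assert (Hz : in_I z) by (apply iter_I; auto).
    destruct (d1_even z Hz) as [k [Hk Hdk]].
    rewrite Hdk. rewrite <- minus_IZR.
    rewrite scale_iff; auto; [|lia].
    assert (Hrodd : Nat.odd (r * Z.to_nat (Z.of_nat (2*k) - 1)) = true).
    { apply Nat.odd_spec. apply Nat.odd_spec in Hodd. destruct Hodd as [a Ha].
      exists (r * (k-1) + a)%nat. replace (Z.to_nat (Z.of_nat (2*k) - 1)) with (2*(k-1)+1)%nat by lia.
      nia. }
    rewrite core; auto.
    + change (Nat.iter (S n') T x) with (T z). split; intro H; lia.
    + apply classify in Hz. destruct Hz as [? [? [? [? ?]]]]. auto.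
    + nia.
  - intros n Hn E. destruct n as [|[|n']]; [lia|lia|].
    replace (S (S n') - 1)%nat with (S n') in * by lia.
    unfold y. destruct (Z.eq_dec (eps (S (S n')) x) (eps (S n') x)) as [e|_].
    { exfalso. rewrite e in E. destruct (eps_pm (S n') x) as [F|F]; rewrite F in E; lia. }
    unfold d. replace (S (S n') - 1)%nat with (S n') by lia. replace (S n' - 1)%nat with n' by lia.
    simpl Nat.iter at 2.
    set (z := Nat.iter n' T x).
    assert (Hz : in_I z) by (apply iter_I; auto).
    destruct (d1_even z Hz) as [k [Hk Hdk]].
    rewrite Hdk. change 1 with (IZR 1). rewrite <- plus_IZR.
    rewrite scale_iff; auto; [|lia].
    assert (Hrodd : Nat.odd (r * Z.to_nat (Z.of_nat (2*k) + 1)) = true).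
    { apply Nat.odd_spec. apply Nat.odd_spec in Hodd. destruct Hodd as [a Ha].
      exists (r * k + a)%nat. replace (Z.to_nat (Z.of_nat (2*k) + 1)) with (2*k+1)%nat by lia.
      nia. }
    rewrite core; auto.
    + change (Nat.iter (S n') T x) with (T z). split; intro H; lia.
    + apply classify in Hz. destruct Hz as [? [? [? [? ?]]]]. auto.
    + nia.
Qed.
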